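(* Let $G$ be a complete split graph with vertex set $Q'\cup S'$ (disjoint), where $|Q'|\geq 1$, $|S'|\geq 2$, $Q'$ is a clique, $S'$ is a stable set, and every vertex of $Q'$ is adjacent to every vertex of $S'$. Then $\eta(G)=|Q'|$.
   Context: All graphs are finite, simple and undirected. For a vertex $v$, $N(v)$ is its set of neighbours. For a positive integer $k$, $[k]=\{1,\dots,k\}$. For a labeling $f:V(G)\to[k]$ and $S\subseteq V(G)$, $f(S)=\sum_{u\in S}f(u)$. A labeling $f:V(G)\to[k]$ is an additive $k$-coloring if $f(N(u))\neq f(N(v))$ for every edge $(u,v)$ of $G$. The additive chromatic number $\eta(G)$ is the least $k$ for which $G$ has an additive $k$-coloring. *)

(* Defs.v *)
From mathcomp Require Import all_boot.
Set Implicit Arguments. Unset Strict Implicit. Unset Printing Implicit Defensive.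

Definition simple_graph (T : finType) (e : rel T) : Prop :=
  symmetric e /\ irreflexive e.

Definition nbhd (T : finType) (e : rel T) (v : T) : {set T} := [set u | e v u].

Definition fsum (T : finType) (f : T -> nat) (S : {set T}) : nat :=
  \sum_(u in S) f u.

Definition additive_coloring (T : finType) (e : rel T) (k : nat) (f : T -> nat) : Prop :=
  (forall v, 1 <= f v <= k) /\
  (forall u v, e u v -> fsum f (nbhd e u) <> fsum f (nbhd e v)).

Definition has_additive_coloring (T : finType) (e : rel T) (k : nat) : Prop :=
  exists f : T -> nat, additive_coloring e k f.

Definition additive_chromatic_number_is (T : finType) (e : rel T) (k : nat) : Prop :=
  0 < k /\ has_additive_coloring e k /\
  (forall k', 0 < k' -> has_additive_coloring e k' -> k <= k').

Definition complete_split (T : finType) (e : rel T) (Q S : {set T}) : Prop :=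
  [disjoint Q & S] /\ Q :|: S = [set: T] /\
  (forall x y, x \in Q -> y \in Q -> x != y -> e x y) /\
  (forall x y, x \in S -> y \in S -> ~~ e x y) /\
  (forall x y, x \in Q -> y \in S -> e x y && e y x).

(* Main.v *)
Require Import Defs.
From mathcomp Require Import all_boot.
From mathcomp Require Import zify.
Set Implicit Arguments. Unset Strict Implicit.

Section S.
Variables (T : finType) (e : rel T) (Q S : {set T}).
Hypotheses (Hs : simple_graph e) (Hc : complete_split e Q S).

Lemma inQS x : (x \in Q) || (x \in S).
Proof. case: Hc => _ [HU _]; by rewrite -in_setU HU in_setT. Qed.

Lemma notQS x : x \in Q -> x \in S -> False.
Proof. case: Hc => Hd _ => xQ xS. by move: Hd; rewrite disjoint_subset => /subsetP/(_ x xQ); rewrite !inE xS. Qed.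

Lemma nbhdQ x : x \in Q -> nbhd e x = [set: T] :\ x.
Proof.
move=> xQ; case: Hs => _ Hirr; case: Hc => _ [_ [HQQ [HSS HQS]]].
apply/setP => y; rewrite !inE.
have [->|nyx] := eqVneq y x; first by rewrite Hirr.
have := inQS y; case/orP => yQ.
- by apply: HQQ; rewrite // eq_sym.
- by case/andP: (HQS x y xQ yQ).
Qed.

Lemma nbhdS x : x \in S -> nbhd e x = Q.
Proof.
move=> xS; case: Hc => _ [_ [HQQ [HSS HQS]]].
apply/setP => y; rewrite !inE.
have := inQS y; case/orP => yQ.
- by rewrite yQ; case/andP: (HQS y x yQ xS).
- by rewrite (negbTE (HSS _ _ xS yQ)); case: (boolP (y \in Q)) => // /notQS/(_ yQ).
Qed.

Lemma fsum_del (f : T -> nat) x : fsum f ([set: T] :\ x) + f x = fsum f [set: T].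
Proof.
rewrite /fsum [in RHS](bigD1 x) //= addnC; congr (_ + _).
by apply: eq_bigl => y; rewrite !inE andbT.
Qed.

Lemma fsum_all (f : T -> nat) : fsum f [set: T] = fsum f Q + fsum f S.
Proof.
case: Hc => Hd [HU _]; rewrite -HU /fsum -(bigU _ _ _ Hd).
by apply: eq_bigl => y; rewrite !inE.
Qed.
End S.

Theorem mainTheorem11 (T : finType) (e : rel T) (Q S : {set T}) :
  simple_graph e -> complete_split e Q S ->
  1 <= #|Q| -> 2 <= #|S| ->
  additive_chromatic_number_is e #|Q|.
Proof.
move=> Hs Hc HQ HS.
have Hc' := Hc; case: Hc' => _ [_ [HQQ [HSS HQS]]].
split => //; split.
- pose f x := if x \in Q then (index x (enum Q)).+1 else #|Q|.
  have fQ x : x \in Q -> 1 <= f x <= #|Q|.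
    by move=> xQ; rewrite /f xQ /= cardE index_mem mem_enum.
  have fS : fsum f S = #|S| * #|Q|.
    rewrite /fsum (eq_bigr (fun _ => #|Q|)); first by rewrite sum_nat_const.
    by move=> y yS; rewrite /f; case: ifP => // /notQS; move/(_ _ _ Hc yS).
  have key u v : e u v -> u \in Q -> fsum f (nbhd e u) <> fsum f (nbhd e v).
    move=> euv uQ; rewrite (nbhdQ Hs Hc uQ).
    have := fsum_del f u; rewrite (fsum_all Hc f) fS.
    have := inQS Hc v; case/orP => vQ.
    + rewrite (nbhdQ Hs Hc vQ) => H1 H2.
      have := fsum_del f v; rewrite (fsum_all Hc f) fS -H2 -H1 => /eqP.
      rewrite eqn_add2l /f uQ vQ eqSS => /eqP Hi.
      have uv : u = v.
        by have := @index_inj T u (enum Q) u v; rewrite !mem_enum => /(_ uQ vQ); apply.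
      by case: Hs => _ Hirr; move: euv; rewrite uv Hirr.
    + rewrite (nbhdS Hc vQ) => H1 H2.
      have := fQ u uQ; move: H1; rewrite H2; have := leq_mul HS (leqnn #|Q|); lia.
  exists f; split.
  + move=> v; have := inQS Hc v; case/orP => vQ; first exact: fQ.
    case Hv: (v \in Q); first exact: fQ.
    by rewrite /f Hv HQ leqnn.
  + move=> u v euv.
    have := inQS Hc u; case/orP => uQ; first exact: key.
    have := inQS Hc v; case/orP => vQ.
    * by move=> H; apply: (key v u) => //; case: Hs => Hsym _; rewrite Hsym.
    * by move: euv; rewrite (negbTE (HSS _ _ uQ vQ)).
- move=> k _ [g [Hg Hgs]].
  have inj : {in Q &, injective g}.
    move=> u v uQ vQ guv; apply/eqP; apply/negPn/negP => nuv.
    apply: (Hgs u v (HQQ _ _ uQ vQ nuv)).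
    rewrite (nbhdQ Hs Hc uQ) (nbhdQ Hs Hc vQ).
    have := fsum_del g u; have := fsum_del g v; rewrite guv; lia.
  have := @uniq_leq_size _ [seq g x | x <- enum Q] (iota 1 k).
  rewrite size_map size_iota -cardE; apply.
  + by rewrite map_inj_in_uniq ?enum_uniq // => x y; rewrite !mem_enum; apply: inj.
  + move=> y /mapP [x _ ->]; rewrite mem_iota; have := Hg x; lia.
Qed.
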